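(* Let $n\ge 2$ and let $\Psi^{(1)},\dots,\Psi^{(t)}$ be $t$ mutually orthogonal quantum Latin squares of order $n$. Then $t\le n-1$. Moreover, if $t=n-1$, then this set of MOQLS is classical.
   Context: A quantum Latin square (QLS) of order $n$ is an $n\times n$ matrix $\Psi=(\psi_{ij})_{1\le i,j\le n}$ whose entries are unit vectors in $\mathbb C^n$ such that the entries of each row and the entries of each column form an orthonormal basis of $\mathbb C^n$. Two QLS $\Psi=(\psi_{ij})$ and $\Phi=(\phi_{ij})$ of order $n$ are orthogonal if $\{\psi_{ij}\otimes\phi_{ij}: 1\le i,j\le n\}$ is an orthonormal basis of $\mathbb C^n\otimes\mathbb C^n$. A set of $t$ mutually orthogonal quantum Latin squares of order $n$ ($t$ MOQLS$(n)$) is a set of $t$ QLS of order $n$ that are pairwise orthogonal. Fix the standard orthonormal basis $\ket{1},\dots,\ket{n}$ of $\mathbb C^n$. Two sets of $t$ MOQLS$(n)$ are isotopic if one can be obtained from the other by a sequence of the operations: (i) multiplying individual entries by phase factors (complex numbers of modulus $1$); (ii) permuting the rows, and permuting the columns, simultaneously in all $t$ squares; (iii) for each square separately, applying one unitary transformation of $\mathbb C^n$ to all entries of that square. A set of $t$ MOQLS$(n)$ is classical if it is isotopic to a set of $t$ MOQLS$(n)$ all of whose entries lie in $\{\ket{1},\dots,\ket{n}\}$. *)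

(* Defs.v *)
From HB Require Import structures.
From mathcomp Require Import all_boot all_order all_algebra all_fingroup.
From mathcomp Require Import reals.
From mathcomp Require Import complex mxtens.
Set Implicit Arguments. Unset Strict Implicit. Unset Printing Implicit Defensive.
Import Order.TTheory GRing.Theory Num.Theory.
Local Open Scope ring_scope.
Local Open Scope complex_scope.

Section QLS.
Variable R : realType.
Local Notation C := (R[i]).

Definition dotv m (u v : 'cV[C]_m) : C := \sum_(k < m) (u k 0)^* * v k 0.

Definition is_onb (I : finType) m (f : I -> 'cV[C]_m) : Prop :=
  (forall a b, dotv (f a) (f b) = (a == b)%:R) /\
  (forall w : 'cV[C]_m, exists c : I -> C, w = \sum_(a : I) c a *: f a).

Definition QLS n (Psi : 'I_n -> 'I_n -> 'cV[C]_n) : Prop :=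
  (forall i, is_onb (fun j => Psi i j)) /\ (forall j, is_onb (fun i => Psi i j)).

(* orthogonality of two QLS: {psi_ij (x) phi_ij} is an ONB of C^n (x) C^n,
   tensor product = Kronecker product ( *t ) of column vectors *)
Definition orthQLS n (Psi Phi : 'I_n -> 'I_n -> 'cV[C]_n) : Prop :=
  is_onb (fun ij : 'I_n * 'I_n => Psi ij.1 ij.2 *t Phi ij.1 ij.2).

Definition MOQLS n t (Psi : 'I_t -> 'I_n -> 'I_n -> 'cV[C]_n) : Prop :=
  (forall k, QLS (Psi k)) /\ (forall k l, k != l -> orthQLS (Psi k) (Psi l)).

Definition unitary n (U : 'M[C]_n) : Prop := U *m (map_mx conjc U)^T = 1%:M.

Inductive isotopy_step n t : ('I_t -> 'I_n -> 'I_n -> 'cV[C]_n) ->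
    ('I_t -> 'I_n -> 'I_n -> 'cV[C]_n) -> Prop :=
  | iso_phase Psi (c : 'I_t -> 'I_n -> 'I_n -> C) :
      (forall k i j, `|c k i j| = 1) ->
      isotopy_step Psi (fun k i j => c k i j *: Psi k i j)
  | iso_perm Psi (s r : {perm 'I_n}) :
      isotopy_step Psi (fun k i j => Psi k (s i) (r j))
  | iso_unitary Psi (U : 'I_t -> 'M[C]_n) :
      (forall k, unitary (U k)) ->
      isotopy_step Psi (fun k i j => U k *m Psi k i j).

Inductive isotopic n t (Psi : 'I_t -> 'I_n -> 'I_n -> 'cV[C]_n) :
    ('I_t -> 'I_n -> 'I_n -> 'cV[C]_n) -> Prop :=
  | isotopic_refl : isotopic Psi Psi
  | isotopic_step Phi Chi : isotopic Psi Phi -> isotopy_step Phi Chi ->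
      isotopic Psi Chi.

Definition ket n (l : 'I_n) : 'cV[C]_n := delta_mx l 0.

Definition classical_MOQLS n t (Psi : 'I_t -> 'I_n -> 'I_n -> 'cV[C]_n) : Prop :=
  exists Phi, MOQLS Phi /\ isotopic Psi Phi /\
    (forall k i j, exists l : 'I_n, Phi k i j = ket l).

End QLS.

(* Main.v *)
Require Import Defs.
From HB Require Import structures.
From mathcomp Require Import all_boot all_order all_algebra all_fingroup.
From mathcomp Require Import reals.
From mathcomp Require Import complex mxtens.
Set Implicit Arguments. Unset Strict Implicit. Unset Printing Implicit Defensive.
Import Order.TTheory GRing.Theory Num.Theory.
Local Open Scope ring_scope.
Section B.
Variable R : realType.
Local Notation C := (R[i]).

Lemma dotvE m (u v : 'cV[C]_m) : dotv u v = \sum_k (u k 0)^* * v k 0.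
Proof. by []. Qed.

Lemma dotvZr m (u v : 'cV[C]_m) a : dotv u (a *: v) = a * dotv u v.
Proof. rewrite !dotvE mulr_sumr; apply: eq_bigr => k _; rewrite mxE mulrCA. by []. Qed.

Lemma dotvZl m (u v : 'cV[C]_m) a : dotv (a *: u) v = a^* * dotv u v.
Proof. rewrite !dotvE mulr_sumr; apply: eq_bigr => k _; rewrite mxE rmorphM mulrA. by []. Qed.

Lemma dotv_sumr m (I : finType) (u : 'cV[C]_m) (f : I -> 'cV[C]_m) :
  dotv u (\sum_a f a) = \sum_a dotv u (f a).
Proof.
rewrite dotvE exchange_big /=; apply: eq_bigr => k _.
rewrite summxE mulr_sumr. by [].
Qed.

Lemma dotvC m (u v : 'cV[C]_m) : dotv v u = (dotv u v)^*.
Proof. rewrite !dotvE rmorph_sum; apply: eq_bigr => k _. by rewrite rmorphM /= conjCK mulrC. Qed.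

Lemma dotv_ge0 m (u : 'cV[C]_m) : 0 <= dotv u u.
Proof. rewrite dotvE; apply: sumr_ge0 => k _; rewrite -normCKC. exact: exprn_ge0. Qed.

Lemma onb_coef (I : finType) m (f : I -> 'cV[C]_m) : is_onb f ->
  forall w, w = \sum_a dotv (f a) w *: f a.
Proof.
move=> [on sp] w; have [c ->] := sp w.
apply: eq_bigr => b _; congr (_ *: _).
rewrite dotv_sumr (bigD1 b) //= big1 ?addr0.
  by rewrite dotvZr on eqxx mulr1.
by move=> a /negbTE nab; rewrite dotvZr on eq_sym nab mulr0.
Qed.

Lemma parseval (I : finType) m (f : I -> 'cV[C]_m) : is_onb f ->
  forall w, \sum_a `|dotv (f a) w|^+2 = dotv w w.
Proof.
move=> hf w; rewrite {3}(onb_coef hf w) dotv_sumr; apply: eq_bigr => a _.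
by rewrite dotvZr (dotvC (f a) w) normCK.
Qed.

Lemma tens_dotv m (a c : 'cV[C]_m) (b d : 'cV[C]_m) :
  dotv (a *t b) (c *t d) = dotv a c * dotv b d.
Proof.
rewrite !dotvE mulr_sum; apply: eq_bigr => k _.
rewrite !mxE. set z := (@mxtens_unindex 1 1 _). have -> : z = (0,0) by case: z => x y; rewrite !ord1.
simpl. rewrite rmorphM mulrACA. by []. Qed.

Lemma onb_card (I : finType) m (g : I -> 'cV[C]_m) : #|I| = m ->
  (forall a b, dotv (g a) (g b) = (a == b)%:R) -> is_onb g.
Proof.
move=> HI on; split=> // w; subst m.
pose A : 'M[C]_#|I| := \matrix_(p, q) g (enum_val q) p 0.
pose B := (map_mx (fun x : C => x^*) A)^T.
have BA : B *m A = 1%:M.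
  apply/matrixP => q q'; rewrite !mxE.
  under eq_bigr do rewrite !mxE.
  by rewrite -dotvE on (inj_eq enum_val_inj).
have AB := mulmx1C BA.
exists (fun a => (B *m w) (enum_rank a) 0).
rewrite -{1}[w]mul1mx -AB -mulmxA.
apply/matrixP => p r; rewrite !mxE summxE.
rewrite [RHS](reindex _ (onW_bij _ (@enum_val_bij I))) /=.
apply: eq_bigr => q _; rewrite !mxE enum_valK ord1 mulrC.
by [].
Qed.

Lemma dot_ket n (a b : 'I_n) : dotv (ket R a) (ket R b) = (a == b)%:R.
Proof.
rewrite dotvE (bigD1 a) //= big1 ?addr0.
  by rewrite !mxE !eqxx /= conjC1 mul1r andbT.
by move=> q /negbTE hq; rewrite !mxE hq /= conjC0 mul0r.
Qed.

Section M.
Variables (n t : nat) (Psi : 'I_t -> 'I_n -> 'I_n -> 'cV[C]_n).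
Hypothesis HM : MOQLS Psi.

Lemma rowONB k i : is_onb (fun j => Psi k i j). Proof. exact: ((HM.1 k).1 i). Qed.
Lemma colONB k j : is_onb (fun i => Psi k i j). Proof. exact: ((HM.1 k).2 j). Qed.
Lemma norm1 k i j : dotv (Psi k i j) (Psi k i j) = 1.
Proof. by rewrite ((rowONB k i).1 j j) eqxx. Qed.
Lemma rowo k i j j' : j != j' -> dotv (Psi k i j) (Psi k i j') = 0.
Proof. by move=> /negbTE h; rewrite ((rowONB k i).1 j j') h. Qed.
Lemma colo k i i' j : i != i' -> dotv (Psi k i j) (Psi k i' j) = 0.
Proof. by move=> /negbTE h; rewrite ((colONB k j).1 i i') h. Qed.
Lemma disj k l (x y : 'I_n * 'I_n) : k != l -> x != y ->
  dotv (Psi k x.1 x.2) (Psi k y.1 y.2) * dotv (Psi l x.1 x.2) (Psi l y.1 y.2) = 0.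
Proof.
move=> kl /negbTE xy; have := (HM.2 k l kl).1 x y.
by rewrite tens_dotv xy.
Qed.

Definition aa k i0 j0 i j := `|dotv (Psi k i j) (Psi k i0 j0)| ^+ 2.

Lemma aa_ge0 k i0 j0 i j : 0 <= aa k i0 j0 i j.
Proof. exact: exprn_ge0. Qed.

Lemma rowsum k i0 j0 i : \sum_j aa k i0 j0 i j = 1.
Proof. by rewrite /aa parseval ?norm1 //; exact: rowONB. Qed.

Lemma aa_le1 k i0 j0 i j : aa k i0 j0 i j <= 1.
Proof.
rewrite -(rowsum k i0 j0 i) (bigD1 j) //= lerDl.
by apply: sumr_ge0 => ? _; exact: aa_ge0.
Qed.

Lemma aa_disj k l i0 j0 i j : k != l -> (i, j) != (i0, j0) ->
  aa k i0 j0 i j * aa l i0 j0 i j = 0.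
Proof.
move=> kl xy; rewrite /aa -exprMn -normrM.
by have := disj kl xy => /= ->; rewrite normr0 expr0n.
Qed.

Lemma sum_le1 i0 j0 i j : (i, j) != (i0, j0) -> \sum_k aa k i0 j0 i j <= 1.
Proof.
move=> xy; case: (boolP [exists k, aa k i0 j0 i j != 0]).
  move=> /existsP [k0 Hk0]; rewrite (bigD1 k0) //= big1 ?addr0 ?aa_le1 //.
  move=> l Hl; have Hkl : k0 != l by rewrite eq_sym.
  have := @aa_disj k0 l i0 j0 i j Hkl xy.
  by move/eqP; rewrite mulf_eq0 (negbTE Hk0) /= => /eqP.
rewrite negb_exists => /forallP H; rewrite big1 ?ler01 //.
by move=> k _; apply/eqP; have := H k; rewrite negbK.
Qed.

Lemma blocksum k i0 j0 :
  \sum_(i | i != i0) \sum_(j | j != j0) aa k i0 j0 i j = (n.-1)%:R.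
Proof.
transitivity (\sum_(i | i != i0) (1 : C)).
  apply: eq_bigr => i hi; rewrite -(rowsum k i0 j0 i) [RHS](bigD1 j0) //=.
  by rewrite /aa colo // normr0 expr0n add0r.
by rewrite sumr_const cardC1 card_ord.
Qed.

Lemma bigS i0 j0 :
  \sum_(i | i != i0) \sum_(j | j != j0) \sum_k aa k i0 j0 i j = (n.-1)%:R *+ t.
Proof.
transitivity (\sum_k \sum_(i | i != i0) \sum_(j | j != j0) aa k i0 j0 i j).
  under eq_bigr do rewrite exchange_big /=.
  by rewrite exchange_big.
by rewrite (eq_bigr (fun _ => (n.-1)%:R)) ?sumr_const ?card_ord // => k _; rewrite blocksum.
Qed.

Lemma pair_neq (i i0 j j0 : 'I_n) : i != i0 -> (i, j) != (i0, j0).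
Proof. by move=> h; rewrite xpair_eqE negb_and h. Qed.

Lemma S_le i0 j0 :
  \sum_(i | i != i0) \sum_(j | j != j0) \sum_k aa k i0 j0 i j <=
  \sum_(i | i != i0) \sum_(j | j != j0) (1 : C).
Proof.
apply: ler_sum => i hi; apply: ler_sum => j hj; apply: sum_le1; exact: pair_neq.
Qed.

Lemma ones (i0 j0 : 'I_n) : \sum_(i | i != i0) \sum_(j | j != j0) (1 : C) = (n.-1)%:R *+ n.-1.
Proof.
rewrite (eq_bigr (fun _ : 'I_n => (n.-1)%:R : C)) ?sumr_const ?cardC1 ?card_ord //.
Qed.

Lemma t_le (i0 : 'I_n) : (1 < n)%N -> (t <= n.-1)%N.
Proof.
move=> n2; have E m k : (m%:R : C) *+ k = (m * k)%:R by rewrite natrM mulr_natr.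
have := S_le i0 i0; rewrite bigS (ones i0 i0) !E ler_nat leq_pmul2l //.
by case: n n2 i0 => [|[|m]].
Qed.

Lemma aa01 (ht : t = n.-1) k i0 j0 i j : aa k i0 j0 i j = 0 \/ aa k i0 j0 i j = 1.
Proof.
case: (eqVneq i i0) => [->|hi].
  case: (eqVneq j j0) => [->|hj].
    by right; rewrite /aa norm1 normr1 expr1n.
  by left; rewrite /aa rowo // normr0 expr0n.
case: (eqVneq j j0) => [->|hj].
  by left; rewrite /aa colo // normr0 expr0n.
have E : \sum_(i | i != i0) \sum_(j | j != j0) (1 - \sum_k aa k i0 j0 i j) = 0.
  under eq_bigr do rewrite sumrB.
  by rewrite sumrB bigS ones ht subrr.
have hs : \sum_l aa l i0 j0 i j = 1.
  have P1 : forall i, i != i0 -> 0 <= \sum_(j | j != j0) (1 - \sum_k aa k i0 j0 i j).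
    move=> i' hi'; apply: sumr_ge0 => j' hj'; rewrite subr_ge0; apply: sum_le1.
    exact: pair_neq.
  have := psumr_eq0P P1 E hi.
  move=> E2; have P2 : forall j', j' != j0 -> 0 <= 1 - \sum_k aa k i0 j0 i j'.
    by move=> j' hj'; rewrite subr_ge0; apply: sum_le1; exact: pair_neq.
  have := psumr_eq0P P2 E2 hj; move/eqP; rewrite subr_eq0 => /eqP.
  by move=> <-.
case: (eqVneq (aa k i0 j0 i j) 0) => [->|hk]; [by left | right].
rewrite -hs (bigD1 k) //= big1 ?addr0 // => l hl.
have Hkl : k != l by rewrite eq_sym.
have := @aa_disj k l i0 j0 i j Hkl (pair_neq j j0 hi).
by move/eqP; rewrite mulf_eq0 (negbTE hk) /= => /eqP.
Qed.

Section Cl.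
Variable r0 : 'I_n.
Hypothesis ht : t = n.-1.

Definition ee k l := Psi k r0 l.
Definition dd k i j l := dotv (ee k l) (Psi k i j).
Definition sig k i j := odflt r0 [pick l | `|dd k i j l| ^+ 2 == 1].

Lemma dd01 k i j l : `|dd k i j l| ^+ 2 = 0 \/ `|dd k i j l| ^+ 2 = 1.
Proof.
exact: (aa01 ht k i j r0 l).
Qed.

Lemma ddsum k i j : \sum_l `|dd k i j l| ^+ 2 = 1.
Proof. by rewrite /dd /ee parseval ?norm1 //; exact: rowONB. Qed.

Lemma sigP k i j : `|dd k i j (sig k i j)| ^+ 2 = 1.
Proof.
rewrite /sig; case: pickP => [l /eqP //|H].
have : \sum_l `|dd k i j l| ^+ 2 = 0.
  apply: big1 => l _; have := H l; case: (dd01 k i j l) => -> //.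
  by rewrite eqxx.
by rewrite ddsum => /eqP; rewrite oner_eq0.
Qed.

Lemma dd_other k i j l : l != sig k i j -> dd k i j l = 0.
Proof.
move=> hl; have := ddsum k i j; rewrite (bigD1 (sig k i j)) //= sigP.
move/(congr1 (fun x => x - 1)); rewrite /= addrC addrK subrr => E.
have P : forall l', l' != sig k i j -> 0 <= `|dd k i j l'| ^+ 2 by move=> *; exact: exprn_ge0.
have := psumr_eq0P P E hl; move/eqP; rewrite expf_eq0 /= normr_eq0 => /eqP //.
Qed.

Lemma Psi_eq k i j : Psi k i j = dd k i j (sig k i j) *: ee k (sig k i j).
Proof.
rewrite {1}(onb_coef (rowONB k r0) (Psi k i j)) (bigD1 (sig k i j)) //= big1 ?addr0 //.
by move=> l hl; rewrite -/(dd k i j l) dd_other // scale0r.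
Qed.

Lemma conjcE (x : C) : conjc x = x^*. Proof. by []. Qed.

Definition UU k : 'M[C]_n := \matrix_(l, p) (ee k l p 0)^*.

Lemma UUe k l : UU k *m ee k l = ket R l.
Proof.
apply/matrixP => q r; rewrite ord1 !mxE.
under eq_bigr do rewrite mxE.
by rewrite -dotvE ((rowONB k r0).1 q l) andbT.
Qed.

Lemma UU_unitary k : unitary (UU k).
Proof.
apply/matrixP => q q'; rewrite !mxE.
under eq_bigr do rewrite !mxE conjcE conjCK.
by rewrite -dotvE ((rowONB k r0).1 q q').
Qed.

Definition Phi k i j := (dd k i j (sig k i j))^* *: (UU k *m Psi k i j).

Lemma PhiE k i j : Phi k i j = ket R (sig k i j).
Proof.
rewrite /Phi (Psi_eq k i j) -scalemxAr UUe scalerA -normCKC sigP.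
by rewrite scale1r.
Qed.

Lemma dd_neq0 k i j : dd k i j (sig k i j) != 0.
Proof.
apply/eqP => E; have := sigP k i j; rewrite E normr0 expr0n => /eqP.
by rewrite eq_sym oner_eq0.
Qed.

Lemma sig_dot k x1 x2 y1 y2 : sig k x1 x2 = sig k y1 y2 ->
  dotv (Psi k x1 x2) (Psi k y1 y2) != 0.
Proof.
move=> E; rewrite (Psi_eq k x1 x2) (Psi_eq k y1 y2) E dotvZl dotvZr /ee norm1 mulr1.
by rewrite mulf_neq0 // ?dd_neq0 // conjC_eq0 -E dd_neq0.
Qed.

Lemma Phi_dot0 k x1 x2 y1 y2 : dotv (Psi k x1 x2) (Psi k y1 y2) = 0 ->
  dotv (Phi k x1 x2) (Phi k y1 y2) = 0.
Proof.
move=> H; rewrite !PhiE dot_ket; case: eqP => // E.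
by have := sig_dot E; rewrite H eqxx.
Qed.

Lemma Phi_MOQLS : MOQLS Phi.
Proof.
split.
  move=> k; split.
    move=> i; apply: onb_card; first exact: card_ord.
    move=> a b /=; case: (eqVneq a b) => [->|ab]; first by rewrite !PhiE dot_ket !eqxx.
    by apply: Phi_dot0; exact: rowo.
  move=> j; apply: onb_card; first exact: card_ord.
  move=> a b /=; case: (eqVneq a b) => [->|ab]; first by rewrite !PhiE dot_ket !eqxx.
  by apply: Phi_dot0; exact: colo.
move=> k l kl; apply: onb_card; first by rewrite card_prod card_ord.
move=> x y /=; rewrite tens_dotv; case: (eqVneq x y) => [->|xy].
  by rewrite !PhiE !dot_ket !eqxx mulr1.
have := disj kl xy => /eqP; rewrite mulf_eq0.
by case/orP => /eqP /Phi_dot0 ->; rewrite ?mul0r ?mulr0.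
Qed.

Lemma Phi_iso : isotopic Psi Phi.
Proof.
have Hc : forall k i j, `|(dd k i j (sig k i j))^*| = 1.
  move=> k i j; rewrite norm_conjC; apply/eqP; rewrite -sqrp_eq1 ?normr_ge0 //.
  by rewrite sigP.
exact: (isotopic_step (isotopic_step (isotopic_refl Psi) (iso_unitary Psi UU_unitary))
          (iso_phase _ Hc)).
Qed.

End Cl.
End M.
End B.


Unset Implicit Arguments.
Theorem mainTheorem2 (R : realType) (n t : nat)
    (Psi : 'I_t -> 'I_n -> 'I_n -> 'cV[R[i]]_n) :
  (2 <= n)%N -> MOQLS Psi ->
  (t <= n.-1)%N /\ (t = n.-1 -> classical_MOQLS Psi).
Proof.
move=> n2 HM; pose r0 : 'I_n := Ordinal (ltnW n2).
split; first exact: (t_le HM r0 n2).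
move=> ht; exists (Phi Psi r0); split; first exact: Phi_MOQLS.
split; first exact: Phi_iso.
by move=> k i j; exists (sig Psi r0 k i j); exact: PhiE.
Qed.
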